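(* Let $\rho,\varepsilon,\nu,\omega,\mu:[0,1]\to\mathbb{R}$ be smooth functions with $\rho,\omega>0$, $\nu\ge 0$, $\mu\ge 0$, $\varepsilon(s)>0$ for all $s\in[0,1]$, and $\mu(1)=\mu_s(1)=0$. Let $u\in C^2([0,1])$ with $u(s)\in[-1,1]$ for all $s$. Consider the stationary problem, in the unknowns $q:[0,1]\to\mathbb{R}^2$ and $\sigma:[0,1]\to\mathbb{R}$, $$ \begin{cases} \left(\sigma q_s-H q_{ss}^\perp\right)_s -\left(G q_{ss}+H q_{s}^\perp\right)_{ss}=0 & \text{in }(0,1),\\ |q_s|^2=1 & \text{in }(0,1),\\ q(0)=0,\quad q_s(0)=-e_2,\\ q_{ss}(1)=0,\quad q_{sss}(1)=0,\quad \sigma(1)=0, \end{cases} $$ where $G(s)=\varepsilon(s)+\nu(s)\big(|q_{ss}(s)|^2-\omega^2(s)\big)_+$ and $H(s)=\mu(s)\big(\omega(s)u(s)-q_s(s)\times q_{ss}(s)\big)$. Then this problem admits a unique solution $(q,\sigma)\in C^4([0,1])\times C^1([0,1])$, given for $s\in[0,1]$ by $$ q(s)=\int_0^s\big(\sin(\theta(\xi)),-\cos(\theta(\xi))\big)\,d\xi,\qquad \sigma(s)=\varepsilon(s)\big(\bar\omega(s)u(s)\big)^2, $$ where $$ \theta(\xi)=\int_0^\xi\bar\omega(z)u(z)\,dz,\qquad \bar\omega(s)=\frac{\mu(s)\omega(s)}{\mu(s)+\varepsilon(s)}. $$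
   Context: Notation: $e_2=(0,1)$. For $v\in\mathbb{R}^2$, $v^\perp=\begin{pmatrix}0&1\\-1&0\end{pmatrix}v$. For $v,w\in\mathbb{R}^2$, $v\times w:=v\cdot w^\perp$ (a scalar). $(x)_+=\max\{x,0\}$. Subscripts $s$ denote derivatives with respect to $s$. *)

(* Defs.v *)
From Stdlib Require Import Reals Lra ClassicalEpsilon.
Open Scope R_scope.

Definition has_deriv01 (f : R -> R) (x l : R) : Prop :=
  forall e, 0 < e -> exists d, 0 < d /\
    forall h, h <> 0 -> Rabs h < d -> 0 <= x + h <= 1 ->
      Rabs ((f (x + h) - f x) / h - l) < e.

Definition cont01 (f : R -> R) (x : R) : Prop :=
  forall e, 0 < e -> exists d, 0 < d /\
    forall y, 0 <= y <= 1 -> Rabs (y - x) < d -> Rabs (f y - f x) < e.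

Definition deriv_chain (k : nat) (f : R -> R) (D : nat -> R -> R) : Prop :=
  (forall x, 0 <= x <= 1 -> D O x = f x) /\
  (forall (j : nat) x, (j < k)%nat -> 0 <= x <= 1 ->
      has_deriv01 (D j) x (D (S j) x)) /\
  (forall x, 0 <= x <= 1 -> cont01 (D k) x).

Definition Ck (k : nat) (f : R -> R) : Prop := exists D, deriv_chain k f D.

Definition smooth01 (f : R -> R) : Prop := forall k, Ck k f.

(* Riemann integral as a total function (value 0 if not integrable). *)
Definition is_RInt (f : R -> R) (a b I : R) : Prop :=
  exists pr : Riemann_integrable f a b, RiemannInt pr = I.

Definition RInt (f : R -> R) (a b : R) : R :=
  match excluded_middle_informative (exists I, is_RInt f a b I) with
  | left H => proj1_sig (constructive_indefinite_description _ H)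
  | right _ => 0
  end.

(* (q1,q2) = q, D j = j-th derivative of q1, E j = of q2.
   v^perp = (v2, -v1);  v x w = v . w^perp = v1 w2 - v2 w1. *)
Definition is_solution (eps nu omega mu u q1 q2 sigma : R -> R) : Prop :=
  exists D E : nat -> R -> R,
    deriv_chain 4 q1 D /\ deriv_chain 4 q2 E /\ Ck 1 sigma /\
    (forall s, 0 < s < 1 -> D 1%nat s ^ 2 + E 1%nat s ^ 2 = 1) /\
    q1 0 = 0 /\ q2 0 = 0 /\ D 1%nat 0 = 0 /\ E 1%nat 0 = -1 /\
    D 2%nat 1 = 0 /\ E 2%nat 1 = 0 /\ D 3%nat 1 = 0 /\ E 3%nat 1 = 0 /\
    sigma 1 = 0 /\
    let G := fun s => eps s + nu s *
                 Rmax (D 2%nat s ^ 2 + E 2%nat s ^ 2 - omega s ^ 2) 0 in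
    let H := fun s => mu s *
                 (omega s * u s - (D 1%nat s * E 2%nat s - E 1%nat s * D 2%nat s)) in
    (* A = sigma q_s - H q_ss^perp,  B = G q_ss + H q_s^perp *)
    let A1 := fun s => sigma s * D 1%nat s - H s * E 2%nat s in
    let A2 := fun s => sigma s * E 1%nat s + H s * D 2%nat s in
    let B1 := fun s => G s * D 2%nat s + H s * E 1%nat s in
    let B2 := fun s => G s * E 2%nat s - H s * D 1%nat s in
    exists dA1 dA2 dB1 dB2 ddB1 ddB2 : R -> R,
      forall s, 0 < s < 1 ->
        derivable_pt_lim A1 s (dA1 s) /\ derivable_pt_lim A2 s (dA2 s) /\
        derivable_pt_lim B1 s (dB1 s) /\ derivable_pt_lim B2 s (dB2 s) /\
        derivable_pt_lim dB1 s (ddB1 s) /\ derivable_pt_lim dB2 s (ddB2 s) /\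
        dA1 s - ddB1 s = 0 /\ dA2 s - ddB2 s = 0.

(* Main.v *)
From Pilot Require Import Defs.
From Stdlib Require Import Reals Lra Psatz FunctionalExtensionality.
From Coquelicot Require Import Coquelicot.
Open Scope R_scope.

Definition flim (P : R -> Prop) (F : R -> R) (L : R) : Prop :=
  forall e, 0 < e -> exists d, 0 < d /\
    forall h, P h -> Rabs h < d -> Rabs (F h - L) < e.

Lemma lim_const P c : flim P (fun _ => c) c.
Proof. intros e He; exists 1; split; [lra|]. intros; unfold Rminus; rewrite Rplus_opp_r, Rabs_R0; lra. Qed.

Lemma lim_ext P F G L : (forall h, P h -> F h = G h) -> flim P F L -> flim P G L.
Proof. intros E H e He; destruct (H e He) as [d [Hd K]]; exists d; split; auto.
  intros h Ph Hh; rewrite <- E; auto. Qed.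

Lemma lim_sub P Q F L : (forall h, Q h -> P h) -> flim P F L -> flim Q F L.
Proof. intros S H e He; destruct (H e He) as [d [Hd K]]; exists d; split; auto. Qed.

Lemma lim_eqL P F L L' : L = L' -> flim P F L -> flim P F L'.
Proof. intros ->; auto. Qed.

Lemma lim_plus P F G L M : flim P F L -> flim P G M -> flim P (fun h => F h + G h) (L + M).
Proof. intros H1 H2 e He.
  destruct (H1 (e/2)) as [d1 [D1 K1]]; [lra|].
  destruct (H2 (e/2)) as [d2 [D2 K2]]; [lra|].
  exists (Rmin d1 d2); split; [apply Rmin_pos; auto|].
  intros h Ph Hh. pose proof (Rmin_l d1 d2); pose proof (Rmin_r d1 d2).
  specialize (K1 h Ph ltac:(lra)); specialize (K2 h Ph ltac:(lra)).
  replace (F h + G h - (L + M)) with ((F h - L) + (G h - M)) by ring.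
  eapply Rle_lt_trans; [apply Rabs_triang|lra]. Qed.

Lemma lim_opp P F L : flim P F L -> flim P (fun h => - F h) (- L).
Proof. intros H e He; destruct (H e He) as [d [Hd K]]; exists d; split; auto.
  intros h Ph Hh; replace (- F h - - L) with (- (F h - L)) by ring; rewrite Rabs_Ropp; auto. Qed.

Lemma lim_minus P F G L M : flim P F L -> flim P G M -> flim P (fun h => F h - G h) (L - M).
Proof. intros; apply lim_plus; auto; apply lim_opp; auto. Qed.

Lemma lim_mult P F G L M : flim P F L -> flim P G M -> flim P (fun h => F h * G h) (L * M).
Proof. intros H1 H2 e He.
  set (a := e / (2 * (Rabs M + 1))).
  assert (Ha : 0 < a) by (unfold a; apply Rdiv_lt_0_compat; [lra| pose proof (Rabs_pos M); lra]).
  set (a1 := Rmin a 1).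
  assert (Ha1 : 0 < a1) by (apply Rmin_pos; lra).
  set (b := e / (2 * (Rabs L + 1))).
  assert (Hb : 0 < b) by (unfold b; apply Rdiv_lt_0_compat; [lra| pose proof (Rabs_pos L); lra]).
  destruct (H1 a1 Ha1) as [d1 [D1 K1]].
  destruct (H2 b Hb) as [d2 [D2 K2]].
  exists (Rmin d1 d2); split; [apply Rmin_pos; auto|].
  intros h Ph Hh. pose proof (Rmin_l d1 d2); pose proof (Rmin_r d1 d2).
  specialize (K1 h Ph ltac:(lra)); specialize (K2 h Ph ltac:(lra)).
  replace (F h * G h - L * M) with ((F h - L) * M + F h * (G h - M)) by ring.
  eapply Rle_lt_trans; [apply Rabs_triang|]. rewrite !Rabs_mult.
  assert (a1 <= a) by apply Rmin_l. assert (a1 <= 1) by apply Rmin_r.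
  assert (HF : Rabs (F h) <= Rabs L + 1).
  { replace (F h) with ((F h - L) + L) by ring. eapply Rle_trans; [apply Rabs_triang|lra]. }
  assert (E1 : Rabs (F h - L) * Rabs M <= a * Rabs M) by (apply Rmult_le_compat_r; [apply Rabs_pos|lra]).
  assert (E2 : Rabs (F h) * Rabs (G h - M) <= (Rabs L + 1) * b).
  { apply Rmult_le_compat; try apply Rabs_pos; lra. }
  assert (E3 : a * Rabs M < e / 2).
  { unfold a. pose proof (Rabs_pos M). apply Rmult_lt_reg_r with (2 * (Rabs M + 1)); [lra|].
    field_simplify; [|lra]. nra. }
  assert (E4 : (Rabs L + 1) * b = e / 2).
  { unfold b. pose proof (Rabs_pos L). field. lra. }
  lra. Qed.

Lemma lim_comp P F L g : flim P F L -> continuity_pt g L -> flim P (fun h => g (F h)) (g L).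
Proof. intros H C e He.
  destruct (C e He) as [a [Ha Ka]].
  destruct (H a Ha) as [d [Hd K]]. exists d; split; auto.
  intros h Ph Hh. specialize (K h Ph Hh).
  destruct (Req_dec (F h) L) as [E|E].
  - rewrite E; unfold Rminus; rewrite Rplus_opp_r, Rabs_R0; lra.
  - apply (Ka (F h)). split; [split; [exact I| auto] | exact K]. Qed.

Definition dense0 (P : R -> Prop) := forall d, 0 < d -> exists h, P h /\ Rabs h < d.

Lemma lim_unique P F L M : dense0 P -> flim P F L -> flim P F M -> L = M.
Proof. intros Dn H1 H2. destruct (Req_dec L M) as [|NE]; auto. exfalso.
  set (e := Rabs (L - M) / 2).
  assert (He : 0 < e) by (unfold e; apply Rdiv_lt_0_compat; [apply Rabs_pos_lt; lra|lra]).
  destruct (H1 e He) as [d1 [D1 K1]]; destruct (H2 e He) as [d2 [D2 K2]].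
  destruct (Dn (Rmin d1 d2)) as [h [Ph Hh]]; [apply Rmin_pos; auto|].
  pose proof (Rmin_l d1 d2); pose proof (Rmin_r d1 d2).
  specialize (K1 h Ph ltac:(lra)); specialize (K2 h Ph ltac:(lra)).
  assert (Rabs (L - M) <= Rabs (F h - M) + Rabs (F h - L)).
  { replace (L - M) with ((F h - M) + - (F h - L)) by ring.
    eapply Rle_trans; [apply Rabs_triang|]. rewrite Rabs_Ropp; lra. }
  unfold e in *; lra. Qed.

Lemma lim_const_val P F v L : dense0 P -> (forall h, P h -> F h = v) -> flim P F L -> v = L.
Proof. intros Dn E H. apply (lim_unique P F); auto. eapply lim_ext; [|apply lim_const].
  intros; symmetry; auto. Qed.

Definition Pd x h := h <> 0 /\ 0 <= x + h <= 1.
Definition Pc x h := 0 <= x + h <= 1.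
Definition I01 x := 0 <= x <= 1.

Lemma hd_lim f x l : has_deriv01 f x l <-> flim (Pd x) (fun h => (f (x+h) - f x)/h) l.
Proof. unfold has_deriv01, flim, Pd. split; intros H e He; destruct (H e He) as [d [Hd K]];
  exists d; split; auto; intros; apply K; tauto. Qed.

Lemma cont_lim f x : cont01 f x <-> flim (Pc x) (fun h => f (x+h)) (f x).
Proof. unfold cont01, flim, Pc. split; intros H e He; destruct (H e He) as [d [Hd K]];
  exists d; split; auto; intros.
  - apply K; auto. replace (x + h - x) with h by ring; auto.
  - replace y with (x + (y - x)) by ring. apply K; auto. replace (x + (y - x)) with y by ring; auto. Qed.

Lemma lim_id P : flim P (fun h => h) 0.
Proof. intros e He; exists e; split; auto; intros; rewrite Rminus_0_r; auto. Qed.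

Lemma lim_add0 (Q : R -> Prop) F L : flim (fun h => h <> 0 /\ Q h) F L -> F 0 = L -> flim Q F L.
Proof. intros H E e He; destruct (H e He) as [d [Hd K]]; exists d; split; auto.
  intros h Qh Hh. destruct (Req_dec h 0) as [->|N].
  - rewrite E; unfold Rminus; rewrite Rplus_opp_r, Rabs_R0; lra.
  - apply K; auto. Qed.

Lemma deriv_cont f x l : has_deriv01 f x l -> cont01 f x.
Proof. intro H; apply hd_lim in H; apply cont_lim.
  apply lim_add0; [|now rewrite Rplus_0_r].
  apply lim_ext with (fun h => f x + (f (x+h) - f x)/h * h).
  { intros h [N _]; field; auto. }
  apply lim_eqL with (f x + l * 0); [ring|].
  apply lim_plus; [apply lim_const|]. apply lim_mult; [|apply lim_id].
  eapply lim_sub; [|exact H]. intros h [N Q]; split; auto. Qed.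

Lemma dense_Pd x : I01 x -> dense0 (Pd x).
Proof. intros [H0 H1] d Hd. set (a := Rmin (d/2) (1/2)).
  assert (0 < a) by (apply Rmin_pos; lra). assert (a <= d/2) by apply Rmin_l. assert (a <= 1/2) by apply Rmin_r.
  destruct (Rle_dec x (1/2)).
  - exists a; unfold Pd; repeat split; try lra. rewrite Rabs_pos_eq; lra.
  - exists (-a); unfold Pd; repeat split; try lra. rewrite Rabs_Ropp, Rabs_pos_eq; lra. Qed.

Lemma deriv_unique f x l l' : I01 x -> has_deriv01 f x l -> has_deriv01 f x l' -> l = l'.
Proof. intros Ix H1 H2; apply hd_lim in H1; apply hd_lim in H2. assert (D := dense_Pd x Ix).
  exact (lim_unique _ _ _ _ D H1 H2). Qed.

Lemma deriv_eqv f x l l' : l = l' -> has_deriv01 f x l -> has_deriv01 f x l'.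
Proof. intros ->; auto. Qed.

Lemma deriv_ext f g x l : I01 x -> (forall y, I01 y -> f y = g y) -> has_deriv01 f x l -> has_deriv01 g x l.
Proof. intros Ix E H; apply hd_lim in H; apply hd_lim. eapply lim_ext; [|exact H].
  intros h [N Q]. rewrite !E; auto. Qed.

Lemma cont_ext f g x : I01 x -> (forall y, I01 y -> f y = g y) -> cont01 f x -> cont01 g x.
Proof. intros Ix E H; apply cont_lim in H; apply cont_lim. rewrite <- (E x Ix). eapply lim_ext; [|exact H].
  intros h Q. cbv beta. rewrite !E; auto. Qed.

Lemma deriv_const c x : has_deriv01 (fun _ => c) x 0.
Proof. apply hd_lim. eapply lim_ext; [|apply lim_const]. intros h [N _]; simpl; field; auto. Qed.

Lemma deriv_id x : has_deriv01 (fun y => y) x 1.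
Proof. apply hd_lim. eapply lim_ext; [|apply lim_const]. intros h [N _]; simpl; field; auto. Qed.

Lemma deriv_plus f g x a b : has_deriv01 f x a -> has_deriv01 g x b -> has_deriv01 (fun y => f y + g y) x (a + b).
Proof. rewrite !hd_lim; intros H1 H2. eapply lim_ext; [|apply lim_plus; [exact H1|exact H2]].
  intros h [N _]; simpl; field; auto. Qed.

Lemma deriv_opp f x a : has_deriv01 f x a -> has_deriv01 (fun y => - f y) x (- a).
Proof. rewrite !hd_lim; intros H1. eapply lim_ext; [|apply lim_opp; exact H1].
  intros h [N _]; simpl; field; auto. Qed.

Lemma deriv_minus f g x a b : has_deriv01 f x a -> has_deriv01 g x b -> has_deriv01 (fun y => f y - g y) x (a - b).
Proof. intros; apply deriv_plus; auto; apply deriv_opp; auto. Qed.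

Lemma deriv_mult f g x a b : has_deriv01 f x a -> has_deriv01 g x b ->
  has_deriv01 (fun y => f y * g y) x (a * g x + f x * b).
Proof. intros H1 H2. assert (C := deriv_cont _ _ _ H2). apply cont_lim in C.
  rewrite hd_lim in *.
  apply lim_ext with (fun h => (f (x+h) - f x)/h * g (x+h) + f x * ((g (x+h) - g x)/h)).
  { intros h [N _]; field; auto. }
  apply lim_plus; apply lim_mult; auto; try apply lim_const.
  eapply lim_sub; [|exact C]. intros h [_ Q]; exact Q. Qed.

Lemma dpl_quot_cont g a g' : derivable_pt_lim g a g' ->
  continuity_pt (fun y => if Req_EM_T y a then g' else (g y - g a) / (y - a)) a.
Proof. intros H e He. destruct (H e He) as [d Hd].
  exists d; split; [apply cond_pos|]. intros y [[_ Ny] Hy]. simpl in *. unfold R_dist in Hy.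
  destruct (Req_EM_T a a) as [_|C]; [|congruence].
  destruct (Req_EM_T y a) as [E|E]; [subst; congruence|].
  specialize (Hd (y - a) ltac:(lra) Hy). replace (a + (y - a)) with y in Hd by ring. exact Hd. Qed.

Lemma deriv_comp f g x a g' : has_deriv01 f x a -> derivable_pt_lim g (f x) g' ->
  has_deriv01 (fun y => g (f y)) x (g' * a).
Proof. intros H1 H2. assert (C := deriv_cont _ _ _ H1). apply cont_lim in C.
  set (phi := fun y => if Req_EM_T y (f x) then g' else (g y - g (f x)) / (y - f x)).
  assert (Cp := dpl_quot_cont _ _ _ H2).
  rewrite hd_lim in *.
  apply lim_ext with (fun h => phi (f (x+h)) * ((f (x+h) - f x)/h)).
  { intros h [N _]. unfold phi. destruct (Req_EM_T (f (x+h)) (f x)) as [E|E].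
    - rewrite E. unfold Rminus; rewrite !Rplus_opp_r. unfold Rdiv; ring.
    - field. split; auto. lra. }
  apply lim_mult; auto.
  assert (phi (f x) = g'). { unfold phi. destruct (Req_EM_T (f x) (f x)); congruence. }
  rewrite <- H. apply lim_comp; [|exact Cp].
  eapply lim_sub; [|exact C]. intros h [_ Q]; exact Q. Qed.

Lemma cont_const c x : cont01 (fun _ => c) x.
Proof. apply cont_lim, lim_const. Qed.
Lemma cont_id x : cont01 (fun y => y) x.
Proof. apply deriv_cont with 1; apply deriv_id. Qed.
Lemma cont_plus f g x : cont01 f x -> cont01 g x -> cont01 (fun y => f y + g y) x.
Proof. rewrite !cont_lim; intros; apply lim_plus; auto. Qed.
Lemma cont_opp f x : cont01 f x -> cont01 (fun y => - f y) x.
Proof. rewrite !cont_lim; intros; apply lim_opp; auto. Qed.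
Lemma cont_minus f g x : cont01 f x -> cont01 g x -> cont01 (fun y => f y - g y) x.
Proof. rewrite !cont_lim; intros; apply lim_minus; auto. Qed.
Lemma cont_mult f g x : cont01 f x -> cont01 g x -> cont01 (fun y => f y * g y) x.
Proof. rewrite !cont_lim; intros; apply lim_mult; auto. Qed.
Lemma cont_comp f g x : cont01 f x -> continuity_pt g (f x) -> cont01 (fun y => g (f y)) x.
Proof. rewrite !cont_lim; intros; apply lim_comp; auto. Qed.

Lemma dpl_deriv F f x l : I01 x -> (forall y, I01 y -> F y = f y) -> derivable_pt_lim F x l -> has_deriv01 f x l.
Proof. intros Ix E H. apply deriv_ext with F; auto.
  intros e He. destruct (H e He) as [d Hd]. exists d; split; [apply cond_pos|].
  intros h N Hh _. apply Hd; auto. Qed.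

Lemma deriv_dpl f x l : 0 < x < 1 -> has_deriv01 f x l -> derivable_pt_lim f x l.
Proof. intros Ix H e He. destruct (H e He) as [d [Hd K]].
  assert (Hm : 0 < Rmin d (Rmin x (1 - x))) by (repeat apply Rmin_pos; lra).
  exists (mkposreal _ Hm). intros h N Hh. simpl in Hh.
  pose proof (Rmin_l d (Rmin x (1-x))). pose proof (Rmin_r d (Rmin x (1-x))).
  pose proof (Rmin_l x (1-x)). pose proof (Rmin_r x (1-x)).
  apply K; auto; try lra. apply Rabs_def2 in Hh; lra. Qed.

Lemma dpl_local f g x l : 0 < x < 1 -> (forall y, 0 < y < 1 -> f y = g y) ->
  derivable_pt_lim f x l -> derivable_pt_lim g x l.
Proof. intros Ix E H e He. destruct (H e He) as [d Hd].
  assert (Hm : 0 < Rmin d (Rmin x (1 - x))) by (repeat apply Rmin_pos; try lra; apply cond_pos).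
  exists (mkposreal _ Hm). intros h N Hh. simpl in Hh.
  pose proof (Rmin_l d (Rmin x (1-x))). pose proof (Rmin_r d (Rmin x (1-x))).
  pose proof (Rmin_l x (1-x)). pose proof (Rmin_r x (1-x)).
  apply Rabs_def2 in Hh as Hh'.
  rewrite <- !E by lra. apply Hd; auto. apply Rabs_def1; lra. Qed.

Lemma dpl_zero f x : 0 < x < 1 -> (forall y, 0 < y < 1 -> f y = 0) -> derivable_pt_lim f x 0.
Proof. intros Ix E. apply dpl_local with (fun _ => 0); auto. intros; symmetry; auto.
  apply derivable_pt_lim_const. Qed.

Lemma deriv_to_dpl_uniq f x l l' : 0 < x < 1 -> has_deriv01 f x l -> derivable_pt_lim f x l' -> l = l'.
Proof. intros Ix H1 H2. apply deriv_dpl in H1; auto. eapply uniqueness_limite; eauto. Qed.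

Lemma dpl_inv y : y <> 0 -> derivable_pt_lim (fun z => / z) y (- (/ y * / y)).
Proof. intro N.
  assert (E : (fun z => / z) = (fct_cte 1 / id)%F).
  { apply functional_extensionality; intro z; unfold fct_cte, id, div_fct, Rdiv; ring. }
  rewrite E. replace (- (/ y * / y)) with ((0 * id y - 1 * fct_cte 1 y) / (id y)²).
  - apply derivable_pt_lim_div; auto. apply derivable_pt_lim_const. apply derivable_pt_lim_id.
  - unfold id, fct_cte, Rsqr; field; auto. Qed.

Fixpoint CK (k : nat) (f : R -> R) : Prop :=
  match k with
  | O => forall x, I01 x -> cont01 f x
  | S k => exists f', (forall x, I01 x -> has_deriv01 f x (f' x)) /\ CK k f'
  end.

Lemma CK_ext k : forall f g, (forall y, I01 y -> f y = g y) -> CK k f -> CK k g.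
Proof. induction k; simpl; intros f g E H.
  - intros x Ix; apply cont_ext with f; auto.
  - destruct H as [f' [D C]]; exists f'; split; auto. intros x Ix; apply deriv_ext with f; auto. Qed.

Lemma CK_cont k : forall f, CK k f -> forall x, I01 x -> cont01 f x.
Proof. destruct k; simpl; intros f H x Ix; auto.
  destruct H as [f' [D _]]. eapply deriv_cont; eauto. Qed.

Lemma CK_down k : forall f, CK (S k) f -> CK k f.
Proof. induction k; intros f H.
  - simpl. apply CK_cont with 1%nat; auto.
  - destruct H as [f' [D C]]. exists f'; split; auto. Qed.

Lemma CK_const k : forall c, CK k (fun _ => c).
Proof. induction k; intro c; simpl.
  - intros; apply cont_const.
  - exists (fun _ => 0); split; [intros; apply deriv_const | exact (IHk 0)]. Qed.

Lemma CK_plus k : forall f g, CK k f -> CK k g -> CK k (fun y => f y + g y).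
Proof. induction k; simpl; intros f g H1 H2.
  - intros; apply cont_plus; auto.
  - destruct H1 as [f' [D1 C1]]; destruct H2 as [g' [D2 C2]].
    exists (fun y => f' y + g' y); split; auto. intros; apply deriv_plus; auto. Qed.

Lemma CK_opp k : forall f, CK k f -> CK k (fun y => - f y).
Proof. induction k; simpl; intros f H1.
  - intros; apply cont_opp; auto.
  - destruct H1 as [f' [D1 C1]].
    exists (fun y => - f' y); split; auto. intros; apply deriv_opp; auto. Qed.

Lemma CK_minus k f g : CK k f -> CK k g -> CK k (fun y => f y - g y).
Proof. intros; apply CK_plus; auto; apply CK_opp; auto. Qed.

Lemma CK_mult k : forall f g, CK k f -> CK k g -> CK k (fun y => f y * g y).
Proof. induction k; intros f g H1 H2.
  - simpl in *; intros; apply cont_mult; auto.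
  - assert (H1' := CK_down _ _ H1); assert (H2' := CK_down _ _ H2).
    destruct H1 as [f' [D1 C1]]; destruct H2 as [g' [D2 C2]].
    exists (fun y => f' y * g y + f y * g' y); split; auto.
    + intros; apply deriv_mult; auto.
    + apply CK_plus; apply IHk; auto. Qed.

Lemma CK_sincos k : forall t, CK k t -> CK k (fun y => sin (t y)) /\ CK k (fun y => cos (t y)).
Proof. induction k; intros t H.
  - simpl in *; split; intros; apply cont_comp; auto; [apply continuity_sin|apply continuity_cos].
  - assert (H' := CK_down _ _ H). destruct (IHk t H') as [S C].
    destruct H as [t' [D C1]]. split.
    + exists (fun y => cos (t y) * t' y); split.
      * intros; apply deriv_comp; auto. apply derivable_pt_lim_sin.
      * apply CK_mult; auto.
    + exists (fun y => - sin (t y) * t' y); split.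
      * intros; apply deriv_comp; auto. apply derivable_pt_lim_cos.
      * apply CK_mult; auto. apply CK_opp; auto. Qed.

Lemma CK_inv k : forall g, CK k g -> (forall x, I01 x -> g x <> 0) -> CK k (fun y => / g y).
Proof. induction k; intros g H N.
  - simpl in *; intros; apply cont_comp; auto. apply continuity_pt_inv; auto.
    apply derivable_continuous_pt. exists 1; apply derivable_pt_lim_id.
  - assert (H' := CK_down _ _ H). assert (I := IHk g H' N).
    destruct H as [g' [D C1]].
    exists (fun y => - (/ g y * / g y) * g' y); split.
    + intros; apply deriv_comp; auto. apply dpl_inv; auto.
    + apply CK_mult; auto. apply CK_opp, CK_mult; auto. Qed.

Lemma Ck_CK k f : Ck k f -> CK k f.
Proof. intros [D [H0 [H1 H2]]].
  assert (G : forall m j, (j + m = k)%nat -> CK m (D j)).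
  { induction m; intros j E.
    - simpl. replace j with k by lia. auto.
    - exists (D (S j)); split.
      + intros x Ix; apply H1; auto; lia.
      + apply IHm; lia. }
  apply CK_ext with (D O). intros y Hy; apply H0; exact Hy. apply G; lia. Qed.

Lemma smooth_CK k f : smooth01 f -> CK k f.
Proof. intro H; apply Ck_CK, H. Qed.

Definition clamp y := Rmax 0 (Rmin y 1).

Lemma clamp_I01 y : I01 (clamp y).
Proof. unfold clamp, I01, Rmax, Rmin; repeat destruct Rle_dec; lra. Qed.

Lemma clamp_id y : I01 y -> clamp y = y.
Proof. unfold clamp, I01, Rmax, Rmin; intros; repeat destruct Rle_dec; lra. Qed.

Lemma clamp_lip y z : Rabs (clamp z - clamp y) <= Rabs (z - y).
Proof. unfold clamp, Rmax, Rmin; repeat destruct Rle_dec;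
  unfold Rabs; repeat destruct Rcase_abs; lra. Qed.

Lemma clamp_cont f y : (forall x, I01 x -> cont01 f x) -> continuity_pt (fun z => f (clamp z)) y.
Proof. intros C e He. destruct (C (clamp y) (clamp_I01 y) e He) as [d [Hd K]].
  exists d; split; auto. intros z [_ Hz]. simpl in *. unfold R_dist in *.
  apply K. apply clamp_I01. pose proof (clamp_lip y z); lra. Qed.

Lemma RInt_link f y : (forall x, I01 x -> cont01 f x) -> I01 y ->
  Defs.RInt f 0 y = RInt (fun z => f (clamp z)) 0 y.
Proof. intros C Iy.
  set (g := fun z => f (clamp z)).
  assert (Eg : ex_RInt g 0 y).
  { apply (@ex_RInt_continuous R_CompleteNormedModule). intros z _. apply continuity_pt_filterlim. apply clamp_cont; auto. }
  assert (Rg := ex_RInt_Reals_0 _ _ _ Eg).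
  assert (Rf : Riemann_integrable f 0 y).
  { apply Riemann_integrable_ext with g; auto. intros x Hx. unfold g. rewrite clamp_id; auto.
    unfold I01 in *. unfold Rmin, Rmax in Hx; destruct Rle_dec; lra. }
  unfold Defs.RInt. destruct ClassicalEpsilon.excluded_middle_informative as [H|H].
  - destruct (ClassicalEpsilon.constructive_indefinite_description _ H) as [I [pr Hpr]]. simpl.
    rewrite <- Hpr, <- RInt_Reals. apply RInt_ext. intros x Hx. unfold g. rewrite clamp_id; auto.
    unfold I01 in *. unfold Rmin, Rmax in Hx; destruct Rle_dec; lra.
  - exfalso; apply H. exists (RiemannInt Rf). exists Rf; auto. Qed.

Lemma RInt_00 f : (forall x, I01 x -> cont01 f x) -> Defs.RInt f 0 0 = 0.
Proof. intros C. rewrite RInt_link; auto. rewrite RInt_point; reflexivity. unfold I01; lra. Qed.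

Lemma FTC01 f x : (forall x, I01 x -> cont01 f x) -> I01 x ->
  has_deriv01 (fun y => Defs.RInt f 0 y) x (f x).
Proof. intros C Ix.
  set (g := fun z => f (clamp z)).
  assert (Eg : forall b, ex_RInt g 0 b).
  { intro b; apply (@ex_RInt_continuous R_CompleteNormedModule). intros z _. apply continuity_pt_filterlim. apply clamp_cont; auto. }
  apply dpl_deriv with (fun b => RInt g 0 b); auto.
  - intros y Iy; symmetry; apply RInt_link; auto.
  - replace (f x) with (g x) by (unfold g; rewrite clamp_id; auto).
    apply is_derive_Reals. apply (is_derive_RInt g (fun b => RInt g 0 b) 0 x).
    + apply filter_forall. intro b; apply (@RInt_correct R_CompleteNormedModule); auto.
    + apply continuity_pt_filterlim. apply clamp_cont; auto. Qed.

Lemma CK_RInt k f : CK k f -> CK (S k) (fun y => Defs.RInt f 0 y).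
Proof. intro H. exists f; split; auto. intros x Ix; apply FTC01; auto. apply CK_cont with k; auto. Qed.


Lemma chain_q1 (th w w1 w2 : R -> R) :
  (forall x, I01 x -> has_deriv01 th x (w x)) ->
  (forall x, I01 x -> has_deriv01 w x (w1 x)) ->
  (forall x, I01 x -> has_deriv01 w1 x (w2 x)) ->
  (forall x, I01 x -> cont01 w2 x) ->
  deriv_chain 4 (fun s => Defs.RInt (fun xi => sin (th xi)) 0 s)
   (fun j => match j with
     | O => fun s => Defs.RInt (fun xi => sin (th xi)) 0 s
     | 1%nat => fun s => sin (th s)
     | 2%nat => fun s => cos (th s) * w s
     | 3%nat => fun s => (- sin (th s) * w s) * w s + cos (th s) * w1 s
     | _ => fun s => - cos (th s) * w s ^ 3 - 3 * sin (th s) * w s * w1 s + cos (th s) * w2 s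
     end).
Proof. intros Ht Hw Hw1 Cw2.
  assert (Cth : forall x, I01 x -> cont01 th x) by (intros; eapply deriv_cont; eauto).
  assert (Cw : forall x, I01 x -> cont01 w x) by (intros; eapply deriv_cont; eauto).
  assert (Cw1 : forall x, I01 x -> cont01 w1 x) by (intros; eapply deriv_cont; eauto).
  assert (Ds : forall x, I01 x -> has_deriv01 (fun y => sin (th y)) x (cos (th x) * w x)).
  { intros; apply deriv_comp; auto. apply derivable_pt_lim_sin. }
  assert (Dc : forall x, I01 x -> has_deriv01 (fun y => cos (th y)) x (- sin (th x) * w x)).
  { intros; apply deriv_comp; auto. apply derivable_pt_lim_cos. }
  split; [intros; reflexivity|]. split.
  - intros j x Hj Ix. destruct j as [|[|[|[|j]]]]; try lia.
    + apply (FTC01 (fun xi => sin (th xi))); auto. intros; apply cont_comp; auto. apply continuity_sin.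
    + apply Ds; auto.
    + apply (deriv_mult (fun y => cos (th y)) w); auto.
    + assert (Dms := deriv_opp (fun y => sin (th y)) x _ (Ds x Ix)).
      eapply deriv_eqv; [|apply (deriv_plus (fun y => (- sin (th y) * w y) * w y) (fun y => cos (th y) * w1 y));
        [apply (deriv_mult (fun y => - sin (th y) * w y) w); [apply (deriv_mult (fun y => - sin (th y)) w)|]
        |apply (deriv_mult (fun y => cos (th y)) w1)]]; eauto.
      simpl; ring.
  - intros x Ix. repeat first [apply cont_plus | apply cont_minus | apply cont_mult | apply cont_opp | apply cont_const]; auto;
    try (apply cont_comp; auto; first [apply continuity_sin|apply continuity_cos]). Qed.

Lemma chain_q2 (th w w1 w2 : R -> R) :
  (forall x, I01 x -> has_deriv01 th x (w x)) ->
  (forall x, I01 x -> has_deriv01 w x (w1 x)) ->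
  (forall x, I01 x -> has_deriv01 w1 x (w2 x)) ->
  (forall x, I01 x -> cont01 w2 x) ->
  deriv_chain 4 (fun s => Defs.RInt (fun xi => - cos (th xi)) 0 s)
   (fun j => match j with
     | O => fun s => Defs.RInt (fun xi => - cos (th xi)) 0 s
     | 1%nat => fun s => - cos (th s)
     | 2%nat => fun s => sin (th s) * w s
     | 3%nat => fun s => (cos (th s) * w s) * w s + sin (th s) * w1 s
     | _ => fun s => - sin (th s) * w s ^ 3 + 3 * cos (th s) * w s * w1 s + sin (th s) * w2 s
     end).
Proof. intros Ht Hw Hw1 Cw2.
  assert (Cth : forall x, I01 x -> cont01 th x) by (intros; eapply deriv_cont; eauto).
  assert (Cw : forall x, I01 x -> cont01 w x) by (intros; eapply deriv_cont; eauto).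
  assert (Cw1 : forall x, I01 x -> cont01 w1 x) by (intros; eapply deriv_cont; eauto).
  assert (Ds : forall x, I01 x -> has_deriv01 (fun y => sin (th y)) x (cos (th x) * w x)).
  { intros; apply deriv_comp; auto. apply derivable_pt_lim_sin. }
  assert (Dc : forall x, I01 x -> has_deriv01 (fun y => cos (th y)) x (- sin (th x) * w x)).
  { intros; apply deriv_comp; auto. apply derivable_pt_lim_cos. }
  split; [intros; reflexivity|]. split.
  - intros j x Hj Ix. destruct j as [|[|[|[|j]]]]; try lia.
    + apply (FTC01 (fun xi => - cos (th xi))); auto. intros; apply cont_opp, cont_comp; auto. apply continuity_cos.
    + eapply deriv_eqv; [|apply (deriv_opp (fun y => cos (th y))); auto]. simpl; ring.
    + apply (deriv_mult (fun y => sin (th y)) w); auto.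
    + eapply deriv_eqv; [|apply (deriv_plus (fun y => (cos (th y) * w y) * w y) (fun y => sin (th y) * w1 y));
        [apply (deriv_mult (fun y => cos (th y) * w y) w); [apply (deriv_mult (fun y => cos (th y)) w)|]
        |apply (deriv_mult (fun y => sin (th y)) w1)]]; eauto.
      simpl; ring.
  - intros x Ix. repeat first [apply cont_plus | apply cont_minus | apply cont_mult | apply cont_opp | apply cont_const]; auto;
    try (apply cont_comp; auto; first [apply continuity_sin|apply continuity_cos]). Qed.

Lemma wbound e m o uu : 0 < e -> 0 <= m -> 0 < o -> -1 <= uu <= 1 ->
  (m * o / (m + e) * uu) ^ 2 <= o ^ 2.
Proof. intros. set (k := m / (m + e)).
  assert (0 <= k) by (unfold k; apply Rmult_le_pos; [lra| left; apply Rinv_0_lt_compat; lra]).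
  assert (k < 1) by (unfold k; apply (Rmult_lt_reg_r (m+e)); [lra|]; unfold Rdiv; rewrite Rmult_assoc, Rinv_l by lra; lra).
  replace (m * o / (m + e) * uu) with (k * o * uu) by (unfold k; field; lra).
  assert (k*k <= 1) by nra. assert (uu*uu <= 1) by nra.
  assert (k*k*(uu*uu) <= 1*1) by (apply Rmult_le_compat; nra).
  replace ((k * o * uu) ^ 2) with ((k*k*(uu*uu)) * (o*o)) by ring.
  replace (o ^ 2) with (1 * (o*o)) by ring.
  apply Rmult_le_compat_r; nra. Qed.

Lemma alg e m o uu n st ct : 0 < e -> 0 <= m -> 0 < o -> -1 <= uu <= 1 -> st ^ 2 + ct ^ 2 = 1 ->
  let w := m * o / (m + e) * uu in
  let G := e + n * Rmax ((ct * w) ^ 2 + (st * w) ^ 2 - o ^ 2) 0 in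
  let H := m * (o * uu - (st * (st * w) - - ct * (ct * w))) in
  e * w ^ 2 * st - H * (st * w) = 0 /\ e * w ^ 2 * - ct + H * (ct * w) = 0 /\
  G * (ct * w) + H * - ct = 0 /\ G * (st * w) - H * st = 0.
Proof. intros He Hm Ho Hu Hsc w G H.
  assert (Wb := wbound e m o uu He Hm Ho Hu). fold w in Wb.
  assert (EG : G = e). { unfold G. rewrite Rmax_right. ring.
    replace ((ct * w) ^ 2 + (st * w) ^ 2) with (w ^ 2 * (st ^ 2 + ct ^ 2)) by ring. rewrite Hsc. lra. }
  assert (EH : H = e * w). { unfold H. replace (st * (st * w) - - ct * (ct * w)) with (w * (st^2 + ct^2)) by ring.
    rewrite Hsc. unfold w. field. lra. }
  rewrite EG, EH. repeat split; ring. Qed.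

Lemma existence eps nu omega mu u :
  CK 3 eps -> CK 3 omega -> CK 3 mu -> CK 2 u ->
  (forall s, 0 <= s <= 1 -> 0 < omega s /\ 0 <= mu s /\ 0 < eps s) ->
  mu 1 = 0 -> has_deriv01 mu 1 0 ->
  (forall s, 0 <= s <= 1 -> -1 <= u s <= 1) ->
  let wbar := fun s => mu s * omega s / (mu s + eps s) in
  let theta := fun xi => Defs.RInt (fun z => wbar z * u z) 0 xi in
  let q1 := fun s => Defs.RInt (fun xi => sin (theta xi)) 0 s in
  let q2 := fun s => Defs.RInt (fun xi => - cos (theta xi)) 0 s in
  let sigma := fun s => eps s * (wbar s * u s) ^ 2 in
  is_solution eps nu omega mu u q1 q2 sigma.
Proof. intros Ce Co Cm Cu Pos Hm1 Dm1 Hu wbar theta q1 q2 sigma.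
  set (w := fun z => wbar z * u z).
  assert (Cw : CK 2 w).
  { apply CK_ext with (fun z => mu z * omega z * / (mu z + eps z) * u z); [intros; reflexivity|].
    apply CK_mult; auto. apply CK_mult; [apply CK_mult|]. 1,2: apply CK_down; auto.
    apply CK_inv. apply CK_plus; apply CK_down; auto.
    intros x Ix; destruct (Pos x Ix) as [? [? ?]]; lra. }
  assert (Cw' := Cw). destruct Cw' as [w1 [Dw [w2 [Dw1 Cw2]]]].
  assert (Contw := CK_cont _ _ Cw).
  assert (Ht : forall x, I01 x -> has_deriv01 theta x (w x)).
  { intros x Ix; apply (FTC01 w); auto. }
  assert (Cth : forall x, I01 x -> cont01 theta x) by (intros; eapply deriv_cont; eauto).
  assert (I0 : I01 0) by (unfold I01; lra). assert (I1 : I01 1) by (unfold I01; lra).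
  assert (th0 : theta 0 = 0) by (apply RInt_00; auto).
  assert (w1z : w 1 = 0) by (unfold w, wbar; rewrite Hm1; unfold Rdiv; ring).
  assert (w11 : w1 1 = 0).
  { set (g := fun z => omega z * / (mu z + eps z) * u z).
    assert (Cg : CK 1 g).
    { apply CK_mult; [apply CK_mult|apply CK_down; auto].
      - do 2 apply CK_down; auto.
      - apply CK_inv. apply CK_plus; do 2 apply CK_down; auto.
        intros x Ix; destruct (Pos x Ix) as [? [? ?]]; lra. }
    destruct Cg as [g' [Dg _]].
    apply (deriv_unique w 1); auto.
    apply deriv_ext with (fun z => mu z * g z); auto.
    { intros; unfold w, wbar, g; unfold Rdiv; ring. }
    eapply deriv_eqv; [|apply deriv_mult; [exact Dm1| apply Dg; auto]]. rewrite Hm1; ring. }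
  exists (fun j => match j with
     | O => fun s => Defs.RInt (fun xi => sin (theta xi)) 0 s
     | 1%nat => fun s => sin (theta s)
     | 2%nat => fun s => cos (theta s) * w s
     | 3%nat => fun s => (- sin (theta s) * w s) * w s + cos (theta s) * w1 s
     | _ => fun s => - cos (theta s) * w s ^ 3 - 3 * sin (theta s) * w s * w1 s + cos (theta s) * w2 s
     end).
  exists (fun j => match j with
     | O => fun s => Defs.RInt (fun xi => - cos (theta xi)) 0 s
     | 1%nat => fun s => - cos (theta s)
     | 2%nat => fun s => sin (theta s) * w s
     | 3%nat => fun s => (cos (theta s) * w s) * w s + sin (theta s) * w1 s
     | _ => fun s => - sin (theta s) * w s ^ 3 + 3 * cos (theta s) * w s * w1 s + sin (theta s) * w2 s
     end).
  split; [apply chain_q1; auto|].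
  split; [apply chain_q2; auto|].
  split.
  { assert (Cs : CK 1 sigma).
    { apply CK_ext with (fun s => eps s * (w s * w s)); [intros; unfold sigma, w; simpl; ring|].
      apply CK_mult; [do 2 apply CK_down; auto|]. apply CK_mult; apply CK_down; auto. }
    destruct Cs as [s' [Ds Cs']].
    exists (fun j => match j with O => sigma | _ => s' end). split; [intros; reflexivity|]. split.
    - intros j x Hj Ix. destruct j; [|lia]. apply Ds; auto.
    - exact Cs'. }
  split. { intros s Hs. simpl. assert (Hsc := sin2_cos2 (theta s)). unfold Rsqr in Hsc. nra. }
  split. { simpl. apply RInt_00. intros; apply cont_comp; auto. apply continuity_sin. }
  split. { simpl. apply RInt_00. intros; apply cont_opp, cont_comp; auto. apply continuity_cos. }
  split. { simpl. rewrite th0, sin_0; reflexivity. }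
  split. { simpl. rewrite th0, cos_0; reflexivity. }
  split. { simpl. rewrite w1z; ring. }
  split. { simpl. rewrite w1z; ring. }
  split. { simpl. rewrite w1z, w11; ring. }
  split. { simpl. rewrite w1z, w11; ring. }
  split. { unfold sigma. change (wbar 1 * u 1) with (w 1). rewrite w1z; ring. }
  intros G H A1 A2 B1 B2.
  exists (fun _ => 0), (fun _ => 0), (fun _ => 0), (fun _ => 0), (fun _ => 0), (fun _ => 0).
  assert (K : forall y, 0 < y < 1 -> A1 y = 0 /\ A2 y = 0 /\ B1 y = 0 /\ B2 y = 0).
  { intros y Hy. destruct (Pos y ltac:(lra)) as [P1 [P2 P3]].
    exact (alg (eps y) (mu y) (omega y) (u y) (nu y) (sin (theta y)) (cos (theta y)) P3 P2 P1
             (Hu y ltac:(lra)) ltac:(rewrite <- (sin2_cos2 (theta y)); unfold Rsqr; ring)). }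
  intros s Hs. repeat split; try (apply derivable_pt_lim_const); try ring;
  apply dpl_zero; auto; intros y Hy; apply (K y Hy). Qed.

Lemma const_open f : (forall s, 0 < s < 1 -> derivable_pt_lim f s 0) ->
  forall x y, 0 < x < 1 -> 0 < y < 1 -> f x = f y.
Proof. intros H.
  assert (K : forall x y, 0 < x < 1 -> 0 < y < 1 -> x < y -> f x = f y).
  { intros x y Hx Hy Hxy. destruct (MVT_cor2 f (fun _ => 0) x y Hxy) as [c [Hc _]].
    - intros c Hc; apply H; lra.
    - lra. }
  intros x y Hx Hy. destruct (Rtotal_order x y) as [L|[E|L]].
  - exact (K x y Hx Hy L).
  - rewrite E; reflexivity.
  - symmetry; exact (K y x Hy Hx L). Qed.

Lemma dense_open a : I01 a -> dense0 (fun h => 0 < a + h < 1).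
Proof. intros [H0 H1] d Hd. set (b := Rmin (d/2) (1/4)).
  assert (0 < b) by (apply Rmin_pos; lra). assert (b <= d/2) by apply Rmin_l. assert (b <= 1/4) by apply Rmin_r.
  destruct (Rle_dec a (1/2)).
  - exists b; split; [split; lra|]. rewrite Rabs_pos_eq; lra.
  - exists (-b); split; [split; lra|]. rewrite Rabs_Ropp, Rabs_pos_eq; lra. Qed.

Lemma val_endpoint f a v : I01 a -> cont01 f a -> (forall y, 0 < y < 1 -> f y = v) -> f a = v.
Proof. intros Ia C E. apply cont_lim in C. symmetry.
  apply (lim_const_val (fun h => 0 < a + h < 1) (fun h => f (a + h))).
  - apply dense_open; auto.
  - intros h Hh; apply E; auto.
  - eapply lim_sub; [|exact C]. intros h Hh; unfold Pc; lra. Qed.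

Definition P1 h := h < 0 /\ 0 < 1 + h.

Lemma dense_P1 : dense0 P1.
Proof. intros d Hd. set (b := Rmin (d/2) (1/2)).
  assert (0 < b) by (apply Rmin_pos; lra). assert (b <= d/2) by apply Rmin_l. assert (b <= 1/2) by apply Rmin_r.
  exists (-b); split; [unfold P1; lra|]. rewrite Rabs_Ropp, Rabs_pos_eq; lra. Qed.

Lemma cont_P1 f : cont01 f 1 -> flim P1 (fun h => f (1 + h)) (f 1).
Proof. intro C; apply cont_lim in C. eapply lim_sub; [|exact C]. intros h [? ?]; unfold Pc; lra. Qed.

Lemma deriv_P1 f l : f 1 = 0 -> has_deriv01 f 1 l -> flim P1 (fun h => f (1 + h) / h) l.
Proof. intros F0 C; apply hd_lim in C. eapply lim_ext; [|eapply lim_sub; [|exact C]].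
  - intros h _; simpl; rewrite F0; unfold Rminus; rewrite Ropp_0, Rplus_0_r; reflexivity.
  - intros h [? ?]; unfold Pd; split; lra. Qed.

Lemma small_zero c : (forall e, 0 < e -> Rabs c < 4 * e) -> c = 0.
Proof. intros H. destruct (Req_dec c 0) as [|N]; auto. exfalso.
  assert (Hc := Rabs_pos_lt c N). specialize (H (Rabs c / 8) ltac:(lra)). lra. Qed.

Lemma c_zero B dB A c : (forall s, 0 < s < 1 -> derivable_pt_lim B s (dB s)) ->
  (forall s, 0 < s < 1 -> A s - dB s = c) ->
  flim P1 (fun h => A (1 + h)) 0 -> flim P1 (fun h => B (1 + h) / h) 0 -> c = 0.
Proof. intros DB Ec LA LB. apply small_zero. intros e He.
  destruct (LA e He) as [d1 [D1 K1]]. destruct (LB e He) as [d2 [D2 K2]].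
  set (d := Rmin (Rmin d1 d2) 1).
  assert (Hd : 0 < d) by (unfold d; repeat apply Rmin_pos; lra).
  assert (d <= d1 /\ d <= d2 /\ d <= 1).
  { unfold d. pose proof (Rmin_l (Rmin d1 d2) 1). pose proof (Rmin_r (Rmin d1 d2) 1).
    pose proof (Rmin_l d1 d2). pose proof (Rmin_r d1 d2). lra. }
  set (h := - d / 2).
  destruct (MVT_cor2 B dB (1 + h) (1 + h / 2)) as [xi [Hm Hxi]].
  - unfold h; lra.
  - intros c0 Hc0; apply DB; unfold h in *; lra.
  - assert (A1 := K1 (xi - 1) ltac:(unfold P1, h in *; lra) ltac:(rewrite Rabs_left; unfold h in *; lra)).
    assert (B1 := K2 h ltac:(unfold P1, h in *; lra) ltac:(rewrite Rabs_left; unfold h in *; lra)).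
    assert (B2 := K2 (h/2) ltac:(unfold P1, h in *; lra) ltac:(rewrite Rabs_left; unfold h in *; lra)).
    replace (1 + (xi - 1)) with xi in A1 by ring.
    rewrite Rminus_0_r in A1, B1, B2.
    assert (Exi : dB xi = A xi - c) by (rewrite <- (Ec xi); [ring| unfold h in *; lra]).
    rewrite Exi in Hm.
    set (b1 := B (1 + h / 2) / (h / 2)) in *. set (b2 := B (1 + h) / h) in *.
    assert (hn : h <> 0) by (unfold h; lra).
    assert (E1 : B (1 + h / 2) = b1 * (h / 2)) by (unfold b1; field; auto).
    assert (E2 : B (1 + h) = b2 * h) by (unfold b2; field; auto).
    rewrite E1, E2 in Hm.
    assert (Ec2 : c = A xi + b1 - 2 * b2).
    { assert (Hm' : (c - (A xi + b1 - 2 * b2)) * (h / 2) = 0).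
      { transitivity (- ((b1 * (h / 2) - b2 * h) - (A xi - c) * (1 + h / 2 - (1 + h)))). field.
        rewrite Hm; ring. }
      apply Rmult_integral in Hm'. destruct Hm' as [Hm'|Hm']; [lra|]. exfalso; unfold h in *; lra. }
    rewrite Ec2. assert (T1 := Rabs_triang (A xi + b1) (-(2*b2))). assert (T2 := Rabs_triang (A xi) b1).
    rewrite Rabs_Ropp, Rabs_mult, (Rabs_pos_eq 2) in T1 by lra. unfold Rminus. lra. Qed.

Lemma Rmax0_cont x : continuity_pt (fun y => Rmax y 0) x.
Proof. intros e He. exists e; split; auto. intros z [_ Hz]. simpl in *. unfold R_dist in *.
  eapply Rle_lt_trans; [|exact Hz]. unfold Rmax; repeat destruct Rle_dec;
  unfold Rabs; repeat destruct Rcase_abs; lra. Qed.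

Lemma solve_k e m o uu n k : 0 < e -> 0 <= m -> 0 < o -> 0 <= n -> -1 <= uu <= 1 ->
  (e + n * Rmax (k ^ 2 - o ^ 2) 0) * k = m * (o * uu - k) -> k = m * o / (m + e) * uu.
Proof. intros He Hm Ho Hn Hu Eq.
  assert (Wb := wbound e m o uu He Hm Ho Hu).
  set (w := m * o / (m + e) * uu) in *.
  assert (Ew : (m + e) * w = m * o * uu) by (unfold w; field; lra).
  assert (Wl : - o <= w <= o) by (split; nra).
  destruct (Rle_dec (k ^ 2 - o ^ 2) 0) as [Le|Gt].
  - rewrite Rmax_right in Eq by lra.
    apply Rmult_eq_reg_l with (m + e); [|lra]. nra.
  - rewrite Rmax_left in Eq by lra. exfalso.
    assert (Rk : 0 <= n * (k ^ 2 - o ^ 2)) by (apply Rmult_le_pos; lra).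
    assert (Eq2 : (e + m + n * (k ^ 2 - o ^ 2)) * k = (m + e) * w) by (rewrite Ew; nra).
    destruct (Rle_dec k 0).
    + assert (k < - o) by nra. nra.
    + assert (k > o) by nra. nra. Qed.

Lemma dzero_open F c s l : (forall y, 0 < y < 1 -> F y = c) -> 0 < s < 1 -> has_deriv01 F s l -> l = 0.
Proof. intros E Hs H. apply deriv_dpl in H; auto.
  assert (H0 : derivable_pt_lim F s 0).
  { apply dpl_local with (fun _ => c); auto. intros; symmetry; auto. apply derivable_pt_lim_const. }
  eapply uniqueness_limite; eauto. Qed.

Lemma dpl_zero_val F s l : (forall y, 0 < y < 1 -> F y = 0) -> 0 < s < 1 -> derivable_pt_lim F s l -> l = 0.
Proof. intros E Hs H. eapply uniqueness_limite; [exact H| apply dpl_zero; auto]. Qed.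

Lemma quot_lim (B G K f g : R -> R) Gl dk gl :
  (forall s, B s = G s * K s + f s * g s) ->
  flim P1 (fun h => G (1 + h)) Gl -> K 1 = 0 -> has_deriv01 K 1 dk ->
  flim P1 (fun h => g (1 + h)) gl -> f 1 = 0 -> has_deriv01 f 1 0 ->
  flim P1 (fun h => B (1 + h) / h) (Gl * dk + 0 * gl).
Proof. intros EB LG K1 DK Lg f1 Df.
  apply lim_ext with (fun h => G (1 + h) * (K (1 + h) / h) + (f (1 + h) / h) * g (1 + h)).
  { intros h [? ?]. rewrite EB. field. lra. }
  apply lim_plus; apply lim_mult; auto; apply deriv_P1; auto. Qed.

Lemma core (eps nu omega mu u tau : R -> R) (D E : nat -> R -> R) (G H A1 A2 B1 B2 : R -> R) :
  (forall j x, (j < 4)%nat -> I01 x -> has_deriv01 (D j) x (D (S j) x)) ->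
  (forall j x, (j < 4)%nat -> I01 x -> has_deriv01 (E j) x (E (S j) x)) ->
  cont01 eps 1 -> cont01 nu 1 -> cont01 omega 1 -> cont01 mu 1 -> cont01 u 1 -> cont01 tau 1 ->
  (forall s, 0 < s < 1 -> D 1%nat s ^ 2 + E 1%nat s ^ 2 = 1) ->
  D 2%nat 1 = 0 -> E 2%nat 1 = 0 -> D 3%nat 1 = 0 -> E 3%nat 1 = 0 -> tau 1 = 0 ->
  mu 1 = 0 -> has_deriv01 mu 1 0 ->
  (forall s, G s = eps s + nu s * Rmax (D 2%nat s ^ 2 + E 2%nat s ^ 2 - omega s ^ 2) 0) ->
  (forall s, H s = mu s * (omega s * u s - (D 1%nat s * E 2%nat s - E 1%nat s * D 2%nat s))) ->
  (forall s, A1 s = tau s * D 1%nat s - H s * E 2%nat s) ->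
  (forall s, A2 s = tau s * E 1%nat s + H s * D 2%nat s) ->
  (forall s, B1 s = G s * D 2%nat s + H s * E 1%nat s) ->
  (forall s, B2 s = G s * E 2%nat s - H s * D 1%nat s) ->
  (exists dA1 dA2 dB1 dB2 ddB1 ddB2 : R -> R,
      forall s, 0 < s < 1 ->
        derivable_pt_lim A1 s (dA1 s) /\ derivable_pt_lim A2 s (dA2 s) /\
        derivable_pt_lim B1 s (dB1 s) /\ derivable_pt_lim B2 s (dB2 s) /\
        derivable_pt_lim dB1 s (ddB1 s) /\ derivable_pt_lim dB2 s (ddB2 s) /\
        dA1 s - ddB1 s = 0 /\ dA2 s - ddB2 s = 0) ->
  forall s, 0 < s < 1 ->
    D 1%nat s * D 2%nat s + E 1%nat s * E 2%nat s = 0 /\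
    G s * (D 1%nat s * E 2%nat s - E 1%nat s * D 2%nat s) - H s = 0 /\
    tau s = H s * (D 1%nat s * E 2%nat s - E 1%nat s * D 2%nat s).
Proof.
  intros HD HE Ce Cn Co Cm Cu Ct Hsq D21 E21 D31 E31 t1 m1 Dm1 HG HH HA1 HA2 HB1 HB2
    [dA1 [dA2 [dB1 [dB2 [ddB1 [ddB2 Heq]]]]]].
  assert (I1 : I01 1) by (unfold I01; lra).
  assert (CD : forall j, (j < 4)%nat -> cont01 (D j) 1) by (intros; eapply deriv_cont; apply HD; auto).
  assert (CE : forall j, (j < 4)%nat -> cont01 (E j) 1) by (intros; eapply deriv_cont; apply HE; auto).
  assert (Orth : forall s, 0 < s < 1 -> D 1%nat s * D 2%nat s + E 1%nat s * E 2%nat s = 0).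
  { intros s Hs. assert (Is : I01 s) by (unfold I01; lra).
    assert (Df := deriv_plus _ _ s _ _ (deriv_mult _ _ s _ _ (HD 1%nat s ltac:(lia) Is) (HD 1%nat s ltac:(lia) Is))
                                   (deriv_mult _ _ s _ _ (HE 1%nat s ltac:(lia) Is) (HE 1%nat s ltac:(lia) Is))).
    assert (Fc : forall y, 0 < y < 1 -> (fun y => D 1%nat y * D 1%nat y + E 1%nat y * E 1%nat y) y = 1).
    { intros y Hy; simpl. rewrite <- (Hsq y Hy); ring. }
    assert (Z := dzero_open _ 1 s _ Fc Hs Df).
    lra. }
  assert (LG : flim P1 (fun h => G (1 + h)) (G 1)).
  { apply lim_ext with (fun h => eps (1+h) + nu (1+h) * Rmax (D 2%nat (1+h) ^ 2 + E 2%nat (1+h) ^ 2 - omega (1+h) ^ 2) 0).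
    { intros h _; cbv beta; rewrite (HG (1 + h)); reflexivity. }
    rewrite (HG 1). apply lim_plus; [apply cont_P1; auto|]. apply lim_mult; [apply cont_P1; auto|].
    apply (lim_comp P1 (fun h => D 2%nat (1+h) ^ 2 + E 2%nat (1+h) ^ 2 - omega (1+h) ^ 2) _ (fun y => Rmax y 0)); [|apply Rmax0_cont].
    repeat first [apply lim_minus | apply lim_plus | apply lim_mult | apply cont_P1 | apply lim_const];
      auto; first [apply CD | apply CE]; lia. }
  set (X := fun s => omega s * u s - (D 1%nat s * E 2%nat s - E 1%nat s * D 2%nat s)).
  assert (LX : flim P1 (fun h => X (1 + h)) (X 1)).
  { unfold X. repeat first [apply lim_minus | apply lim_plus | apply lim_mult | apply cont_P1 | apply lim_const];
      auto; first [apply CD | apply CE]; lia. }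
  assert (LH : flim P1 (fun h => H (1 + h)) (H 1)).
  { apply lim_ext with (fun h => mu (1 + h) * X (1 + h)). { intros h _; cbv beta; rewrite (HH (1 + h)); reflexivity. }
    rewrite (HH 1). apply lim_mult; auto. apply cont_P1; auto. }
  assert (H1 : H 1 = 0) by (rewrite HH, m1; ring).
  assert (C1 : forall y, 0 < y < 1 -> A1 y - dB1 y = A1 (1/2) - dB1 (1/2)).
  { intros y Hy. apply (const_open (fun y => A1 y - dB1 y)); try lra. intros s Hs. destruct (Heq s Hs) as [a1 [_ [_ [_ [b1 [_ [e1 _]]]]]]].
    rewrite <- e1. apply derivable_pt_lim_minus; auto. }
  assert (C2 : forall y, 0 < y < 1 -> A2 y - dB2 y = A2 (1/2) - dB2 (1/2)).
  { intros y Hy. apply (const_open (fun y => A2 y - dB2 y)); try lra. intros s Hs. destruct (Heq s Hs) as [_ [a2 [_ [_ [_ [b2 [_ e2]]]]]]].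
    rewrite <- e2. apply derivable_pt_lim_minus; auto. }
  assert (c1z : A1 (1/2) - dB1 (1/2) = 0).
  { apply (c_zero B1 dB1 A1); auto.
    - intros s Hs; apply (Heq s Hs).
    - apply lim_ext with (fun h => tau (1+h) * D 1%nat (1+h) - H (1+h) * E 2%nat (1+h)). { intros h _; cbv beta; rewrite (HA1 (1 + h)); reflexivity. }
      apply lim_eqL with (tau 1 * D 1%nat 1 - H 1 * E 2%nat 1). { rewrite t1, H1; ring. }
      apply lim_minus; apply lim_mult; auto; apply cont_P1; auto; first [apply CD | apply CE]; lia.
    - apply lim_eqL with (G 1 * D 3%nat 1 + 0 * (X 1 * E 1%nat 1)). { rewrite D31; ring. }
      apply (quot_lim B1 G (D 2%nat) mu (fun s => X s * E 1%nat s)); auto.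
      + intros s; rewrite HB1, HH; unfold X; ring.
      + apply lim_mult; auto. apply cont_P1; apply CE; lia. }
  assert (c2z : A2 (1/2) - dB2 (1/2) = 0).
  { apply (c_zero B2 dB2 A2); auto.
    - intros s Hs; apply (Heq s Hs).
    - apply lim_ext with (fun h => tau (1+h) * E 1%nat (1+h) + H (1+h) * D 2%nat (1+h)). { intros h _; cbv beta; rewrite (HA2 (1 + h)); reflexivity. }
      apply lim_eqL with (tau 1 * E 1%nat 1 + H 1 * D 2%nat 1). { rewrite t1, H1; ring. }
      apply lim_plus; apply lim_mult; auto; apply cont_P1; auto; first [apply CD | apply CE]; lia.
    - apply lim_eqL with (G 1 * E 3%nat 1 + 0 * (- (X 1 * D 1%nat 1))). { rewrite E31; ring. }
      apply (quot_lim B2 G (E 2%nat) mu (fun s => - (X s * D 1%nat s))); auto.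
      + intros s; rewrite HB2, HH; unfold X; ring.
      + apply lim_opp, lim_mult; auto. apply cont_P1; apply CD; lia. }
  set (N := fun y => - B1 y * E 1%nat y + B2 y * D 1%nat y).
  assert (DN : forall s, 0 < s < 1 -> derivable_pt_lim N s 0).
  { intros s Hs. assert (Is : I01 s) by (unfold I01; lra).
    destruct (Heq s Hs) as [_ [_ [b1 [b2 _]]]].
    assert (dE1 := deriv_dpl _ _ _ Hs (HE 1%nat s ltac:(lia) Is)).
    assert (dD1 := deriv_dpl _ _ _ Hs (HD 1%nat s ltac:(lia) Is)).
    assert (K := derivable_pt_lim_plus _ _ s _ _
                 (derivable_pt_lim_mult _ _ s _ _ (derivable_pt_lim_opp _ s _ b1) dE1)
                 (derivable_pt_lim_mult _ _ s _ _ b2 dD1)).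
    replace 0 with ((- dB1 s * E 1%nat s + - B1 s * E 2%nat s) + (dB2 s * D 1%nat s + B2 s * D 2%nat s)).
    - exact K.
    - assert (e1 := C1 s Hs). assert (e2 := C2 s Hs). rewrite c1z in e1. rewrite c2z in e2.
      assert (dB1 s = A1 s) by lra. assert (dB2 s = A2 s) by lra.
      rewrite H0, H2, HA1, HA2, HB1, HB2. ring. }
  assert (N0 : forall y, 0 < y < 1 -> N y = 0).
  { intros y Hy. transitivity (N (1/2)). apply (const_open N); auto; lra.
    apply (lim_const_val P1 (fun h => N (1 + h))).
    - apply dense_P1.
    - intros h [? ?]. apply (const_open N); auto; lra.
    - unfold N. apply lim_eqL with (- (0 * 0) * E 1%nat 1 + (0 * 0) * D 1%nat 1); [ring|].
      assert (LBq1 : flim P1 (fun h => B1 (1 + h)) (0 * 0)).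
      { apply lim_ext with (fun h => B1 (1 + h) / h * h). { intros h [? ?]; field; lra. }
        apply lim_mult; [|apply lim_id].
        apply lim_eqL with (G 1 * D 3%nat 1 + 0 * (X 1 * E 1%nat 1)). { rewrite D31; ring. }
        apply (quot_lim B1 G (D 2%nat) mu (fun s => X s * E 1%nat s)); auto.
        + intros s; rewrite HB1, HH; unfold X; ring.
        + apply lim_mult; auto. apply cont_P1; apply CE; lia. }
      assert (LBq2 : flim P1 (fun h => B2 (1 + h)) (0 * 0)).
      { apply lim_ext with (fun h => B2 (1 + h) / h * h). { intros h [? ?]; field; lra. }
        apply lim_mult; [|apply lim_id].
        apply lim_eqL with (G 1 * E 3%nat 1 + 0 * (- (X 1 * D 1%nat 1))). { rewrite E31; ring. }
        apply (quot_lim B2 G (E 2%nat) mu (fun s => - (X s * D 1%nat s))); auto.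
        + intros s; rewrite HB2, HH; unfold X; ring.
        + apply lim_opp, lim_mult; auto. apply cont_P1; apply CD; lia. }
      apply lim_plus; apply lim_mult; [apply lim_opp; auto | | auto |]; apply cont_P1; first [apply CD|apply CE]; lia. }
  intros s Hs. assert (Is : I01 s) by (unfold I01; lra).
  assert (sq := Hsq s Hs). assert (or := Orth s Hs). assert (n0 := N0 s Hs).
  set (k := D 1%nat s * E 2%nat s - E 1%nat s * D 2%nat s) in *.
  assert (Mk : G s * k - H s = 0).
  { rewrite <- n0. unfold N. rewrite HB1, HB2. unfold k.
    transitivity (G s * (D 1%nat s * E 2%nat s - E 1%nat s * D 2%nat s) - H s * (D 1%nat s ^ 2 + E 1%nat s ^ 2)).
    rewrite sq; ring. ring. }
  split; auto. split; auto.
  assert (Bz : forall y, 0 < y < 1 -> B1 y = 0 /\ B2 y = 0).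
  { intros y Hy. assert (sqy := Hsq y Hy). assert (ory := Orth y Hy). assert (ny := N0 y Hy).
    unfold N in ny. rewrite HB1, HB2 in *.
    set (a := D 1%nat y) in *. set (b := E 1%nat y) in *. set (c := D 2%nat y) in *. set (d := E 2%nat y) in *.
    assert (Ec : c = - (a * d - b * c) * b).
    { transitivity (c * (a ^ 2 + b ^ 2) - a * (a * c + b * d)). rewrite sqy, ory; ring. ring. }
    assert (Ed : d = (a * d - b * c) * a).
    { transitivity (d * (a ^ 2 + b ^ 2) - b * (a * c + b * d)). rewrite sqy, ory; ring. ring. }
    assert (Mky : G y * (a * d - b * c) - H y = 0).
    { rewrite <- ny. transitivity (G y * (a * d - b * c) - H y * (a ^ 2 + b ^ 2)). rewrite sqy; ring. ring. }
    split.
    - rewrite Ec. transitivity (- b * (G y * (a * d - b * c) - H y)). ring. rewrite Mky; ring.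
    - rewrite Ed. transitivity (a * (G y * (a * d - b * c) - H y)). ring. rewrite Mky; ring. }
  destruct (Heq s Hs) as [_ [_ [b1 [b2 _]]]].
  assert (dB1z : dB1 s = 0) by (apply (dpl_zero_val B1 s); auto; intros; apply Bz; auto).
  assert (dB2z : dB2 s = 0) by (apply (dpl_zero_val B2 s); auto; intros; apply Bz; auto).
  assert (a1 := C1 s Hs). assert (a2 := C2 s Hs). rewrite c1z, dB1z in a1. rewrite c2z, dB2z in a2.
  rewrite HA1 in a1. rewrite HA2 in a2.
  transitivity (tau s * (D 1%nat s ^ 2 + E 1%nat s ^ 2)). rewrite sq; ring.
  transitivity ((tau s * D 1%nat s - H s * E 2%nat s) * D 1%nat s + (tau s * E 1%nat s + H s * D 2%nat s) * E 1%nat s + H s * k).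
  unfold k; ring. rewrite Rminus_0_r in a1, a2. rewrite a1, a2. ring. Qed.

Lemma ident01 f g f' g' : (forall x, I01 x -> has_deriv01 f x (f' x)) ->
  (forall x, I01 x -> has_deriv01 g x (g' x)) -> (forall x, 0 < x < 1 -> f' x = g' x) ->
  f 0 = g 0 -> forall x, I01 x -> f x = g x.
Proof. intros Hf Hg E0 F0 x Ix.
  set (h := fun y => f y - g y).
  assert (Dh : forall y, I01 y -> has_deriv01 h y (f' y - g' y)) by (intros; apply deriv_minus; auto).
  assert (Ch : forall y, 0 < y < 1 -> h y = h (1/2)).
  { intros y Hy. apply (const_open h); try lra. intros s Hs.
    replace 0 with (f' s - g' s) by (rewrite E0; auto; ring). apply deriv_dpl; auto. apply Dh; unfold I01; lra. }
  assert (H0 : h 0 = h (1/2)) by (apply val_endpoint; [unfold I01; lra| eapply deriv_cont; apply Dh; unfold I01; lra| auto]).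
  assert (Hx : h x = h (1/2)) by (apply val_endpoint; [auto| eapply deriv_cont; apply Dh; auto| auto]).
  unfold h in *. lra. Qed.

Lemma cont_eq01 f g : (forall x, I01 x -> cont01 f x) -> (forall x, I01 x -> cont01 g x) ->
  (forall x, 0 < x < 1 -> f x = g x) -> forall x, I01 x -> f x = g x.
Proof. intros Cf Cg E x Ix. assert (K : (fun y => f y - g y) x = 0).
  { apply (val_endpoint (fun y => f y - g y) x 0); auto. apply cont_minus; auto. intros y Hy; rewrite E; auto; ring. }
  simpl in K; lra. Qed.

Lemma uniqueness eps nu omega mu u :
  CK 3 eps -> CK 3 nu -> CK 3 omega -> CK 3 mu -> CK 2 u ->
  (forall s, 0 <= s <= 1 -> 0 < omega s /\ 0 <= nu s /\ 0 <= mu s /\ 0 < eps s) ->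
  mu 1 = 0 -> has_deriv01 mu 1 0 ->
  (forall s, 0 <= s <= 1 -> -1 <= u s <= 1) ->
  let wbar := fun s => mu s * omega s / (mu s + eps s) in
  let theta := fun xi => Defs.RInt (fun z => wbar z * u z) 0 xi in
  let q1 := fun s => Defs.RInt (fun xi => sin (theta xi)) 0 s in
  let q2 := fun s => Defs.RInt (fun xi => - cos (theta xi)) 0 s in
  let sigma := fun s => eps s * (wbar s * u s) ^ 2 in
  (forall p1 p2 tau, is_solution eps nu omega mu u p1 p2 tau ->
     forall s, 0 <= s <= 1 -> p1 s = q1 s /\ p2 s = q2 s /\ tau s = sigma s).
Proof. intros Ce Cn Co Cm Cu Pos Hm1 Dm1 Hu wbar theta q1 q2 sigma p1 p2 tau Hsol.
  set (w := fun z => wbar z * u z).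
  assert (Cw : CK 2 w).
  { apply CK_ext with (fun z => mu z * omega z * / (mu z + eps z) * u z); [intros; reflexivity|].
    apply CK_mult; auto. apply CK_mult; [apply CK_mult|]. 1,2: apply CK_down; auto.
    apply CK_inv. apply CK_plus; apply CK_down; auto.
    intros x Ix; destruct (Pos x Ix) as [? [? [? ?]]]; lra. }
  assert (Contw := CK_cont _ _ Cw).
  assert (Ht : forall x, I01 x -> has_deriv01 theta x (w x)).
  { intros x Ix; apply (FTC01 w); auto. }
  assert (Cth : forall x, I01 x -> cont01 theta x) by (intros; eapply deriv_cont; eauto).
  assert (I0 : I01 0) by (unfold I01; lra). assert (I1 : I01 1) by (unfold I01; lra).
  assert (th0 : theta 0 = 0) by (apply RInt_00; auto).
  destruct Hsol as [D [E [[HD0 [HDd HDc]] [[HE0 [HEd HEc]] [Ctau [Hsq [p10 [p20 [D10 [E10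
    [D21 [E21 [D31 [E31 [tau1 Heq]]]]]]]]]]]]]]].
  assert (CKtau := Ck_CK _ _ Ctau).
  assert (K := core eps nu omega mu u tau D E
    (fun s => eps s + nu s * Rmax (D 2%nat s ^ 2 + E 2%nat s ^ 2 - omega s ^ 2) 0)
    (fun s => mu s * (omega s * u s - (D 1%nat s * E 2%nat s - E 1%nat s * D 2%nat s)))
    (fun s => tau s * D 1%nat s - mu s * (omega s * u s - (D 1%nat s * E 2%nat s - E 1%nat s * D 2%nat s)) * E 2%nat s)
    (fun s => tau s * E 1%nat s + mu s * (omega s * u s - (D 1%nat s * E 2%nat s - E 1%nat s * D 2%nat s)) * D 2%nat s)
    (fun s => (eps s + nu s * Rmax (D 2%nat s ^ 2 + E 2%nat s ^ 2 - omega s ^ 2) 0) * D 2%nat s + mu s * (omega s * u s - (D 1%nat s * E 2%nat s - E 1%nat s * D 2%nat s)) * E 1%nat s)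
    (fun s => (eps s + nu s * Rmax (D 2%nat s ^ 2 + E 2%nat s ^ 2 - omega s ^ 2) 0) * E 2%nat s - mu s * (omega s * u s - (D 1%nat s * E 2%nat s - E 1%nat s * D 2%nat s)) * D 1%nat s)
    HDd HEd).
  specialize (K (CK_cont 3 _ Ce 1 I1) (CK_cont 3 _ Cn 1 I1) (CK_cont 3 _ Co 1 I1) (CK_cont 3 _ Cm 1 I1)
     (CK_cont 2 _ Cu 1 I1) (CK_cont 1 _ CKtau 1 I1) Hsq D21 E21 D31 E31 tau1 Hm1 Dm1
     (fun s => eq_refl) (fun s => eq_refl) (fun s => eq_refl) (fun s => eq_refl) (fun s => eq_refl) (fun s => eq_refl) Heq).
  assert (Kw : forall y, 0 < y < 1 -> D 1%nat y * E 2%nat y - E 1%nat y * D 2%nat y = w y /\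
     D 2%nat y = - w y * E 1%nat y /\ E 2%nat y = w y * D 1%nat y).
  { intros y Hy. destruct (K y Hy) as [or [mk _]]. assert (sq := Hsq y Hy).
    destruct (Pos y ltac:(lra)) as [P1 [P2 [P3 P4]]].
    set (a := D 1%nat y) in *. set (b := E 1%nat y) in *. set (c := D 2%nat y) in *. set (d := E 2%nat y) in *.
    assert (Ec : c = - (a * d - b * c) * b).
    { transitivity (c * (a ^ 2 + b ^ 2) - a * (a * c + b * d)). rewrite sq, or; ring. ring. }
    assert (Ed : d = (a * d - b * c) * a).
    { transitivity (d * (a ^ 2 + b ^ 2) - b * (a * c + b * d)). rewrite sq, or; ring. ring. }
    assert (Ecd : c ^ 2 + d ^ 2 = (a * d - b * c) ^ 2).
    { transitivity ((a ^ 2 + b ^ 2) * (c ^ 2 + d ^ 2) - (a * c + b * d) ^ 2). rewrite sq, or; ring. ring. }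
    rewrite Ecd in mk.
    assert (kw : a * d - b * c = w y).
    { apply (solve_k (eps y) (mu y) (omega y) (u y) (nu y)); auto. apply Hu; lra. lra. }
    rewrite <- kw. auto. }
  set (cf := fun y => D 1%nat y * sin (theta y) - E 1%nat y * cos (theta y)).
  assert (Dcf : forall y, I01 y -> has_deriv01 cf y
     ((D 2%nat y * sin (theta y) + D 1%nat y * (cos (theta y) * w y)) -
      (E 2%nat y * cos (theta y) + E 1%nat y * (- sin (theta y) * w y)))).
  { intros y Iy. apply (deriv_minus (fun y => D 1%nat y * sin (theta y)) (fun y => E 1%nat y * cos (theta y)));
    [apply (deriv_mult (D 1%nat) (fun y => sin (theta y))) | apply (deriv_mult (E 1%nat) (fun y => cos (theta y)))];
    try (apply HDd; auto; lia); try (apply HEd; auto; lia); apply deriv_comp; auto;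
    first [apply derivable_pt_lim_sin | apply derivable_pt_lim_cos]. }
  assert (Ccf : forall y, 0 < y < 1 -> cf y = cf (1/2)).
  { intros y Hy. apply (const_open cf); try lra. intros s Hs.
    assert (Is : I01 s) by (unfold I01; lra). destruct (Kw s Hs) as [_ [e2 e3]].
    assert (Z := Dcf s Is). rewrite e2, e3 in Z. apply deriv_dpl; auto.
    eapply deriv_eqv; [|exact Z]. ring. }
  assert (cf0 : cf 0 = cf (1/2)) by (apply val_endpoint; auto; eapply deriv_cont; apply Dcf; auto).
  assert (cfv : cf 0 = 1) by (unfold cf; rewrite th0, sin_0, cos_0, D10, E10; ring).
  assert (T : forall y, 0 < y < 1 -> D 1%nat y = sin (theta y) /\ E 1%nat y = - cos (theta y)).
  { intros y Hy. assert (c1 : cf y = 1) by (rewrite Ccf; auto; lra). unfold cf in c1.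
    assert (sq := Hsq y Hy). assert (sc := sin2_cos2 (theta y)). unfold Rsqr in sc.
    assert (Z : (D 1%nat y - sin (theta y)) ^ 2 + (E 1%nat y + cos (theta y)) ^ 2 = 0).
    { transitivity ((D 1%nat y ^ 2 + E 1%nat y ^ 2) + (sin (theta y) * sin (theta y) + cos (theta y) * cos (theta y))
        - 2 * (D 1%nat y * sin (theta y) - E 1%nat y * cos (theta y))). ring. rewrite sq, sc, c1; ring. }
    pose proof (pow2_ge_0 (D 1%nat y - sin (theta y))). pose proof (pow2_ge_0 (E 1%nat y + cos (theta y))).
    assert (Z1 : (D 1%nat y - sin (theta y)) ^ 2 = 0) by lra.
    assert (Z2 : (E 1%nat y + cos (theta y)) ^ 2 = 0) by lra.
    assert (D 1%nat y - sin (theta y) = 0) by nra. assert (E 1%nat y + cos (theta y) = 0) by nra. split; lra. }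
  intros s Is. split; [|split].
  - apply (ident01 p1 q1 (D 1%nat) (fun y => sin (theta y))); auto.
    + intros x Ix. apply deriv_ext with (D 0%nat); auto. apply HDd; auto; lia.
    + intros x Ix. apply (FTC01 (fun y => sin (theta y))); auto. intros; apply cont_comp; auto. apply continuity_sin.
    + intros x Hx; apply T; auto.
    + rewrite p10. symmetry. apply RInt_00. intros; apply cont_comp; auto. apply continuity_sin.
  - apply (ident01 p2 q2 (E 1%nat) (fun y => - cos (theta y))); auto.
    + intros x Ix. apply deriv_ext with (E 0%nat); auto. apply HEd; auto; lia.
    + intros x Ix. apply (FTC01 (fun y => - cos (theta y))); auto. intros; apply cont_opp, cont_comp; auto. apply continuity_cos.
    + intros x Hx; apply T; auto.
    + rewrite p20. symmetry. apply RInt_00. intros; apply cont_opp, cont_comp; auto. apply continuity_cos.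
  - apply cont_eq01; auto.
    + apply CK_cont with 1%nat; auto.
    + intros x Ix. unfold sigma. apply cont_mult. apply CK_cont with 3%nat; auto.
      change (fun y => (wbar y * u y) ^ 2) with (fun y => w y ^ 2). simpl.
      apply cont_mult; auto. apply cont_mult; auto. apply cont_const.
    + intros y Hy. destruct (K y Hy) as [_ [_ tk]]. destruct (Kw y Hy) as [kw _].
      rewrite tk, kw. destruct (Pos y ltac:(lra)) as [P1 [P2 [P3 P4]]].
      unfold sigma. change (wbar y * u y) with (w y). unfold w, wbar. field. lra. Qed.

Import Pilot.Defs.

Theorem proposition1 (rho eps nu omega mu u : R -> R) :
  smooth01 rho -> smooth01 eps -> smooth01 nu -> smooth01 omega -> smooth01 mu ->
  (forall s, 0 <= s <= 1 ->
     0 < rho s /\ 0 < omega s /\ 0 <= nu s /\ 0 <= mu s /\ 0 < eps s) ->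
  mu 1 = 0 -> has_deriv01 mu 1 0 ->
  Ck 2 u -> (forall s, 0 <= s <= 1 -> -1 <= u s <= 1) ->
  let wbar := fun s => mu s * omega s / (mu s + eps s) in
  let theta := fun xi => RInt (fun z => wbar z * u z) 0 xi in
  let q1 := fun s => RInt (fun xi => sin (theta xi)) 0 s in
  let q2 := fun s => RInt (fun xi => - cos (theta xi)) 0 s in
  let sigma := fun s => eps s * (wbar s * u s) ^ 2 in
  is_solution eps nu omega mu u q1 q2 sigma /\
  (forall p1 p2 tau, is_solution eps nu omega mu u p1 p2 tau ->
     forall s, 0 <= s <= 1 -> p1 s = q1 s /\ p2 s = q2 s /\ tau s = sigma s).
Proof.
  intros Hr He Hn Ho Hm Pos mu1 Dm1 Cu Hu wbar theta q1 q2 sigma. split.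
  - exact (existence eps nu omega mu u (smooth_CK 3 _ He) (smooth_CK 3 _ Ho) (smooth_CK 3 _ Hm) (Ck_CK _ _ Cu)
      (fun s Hs => match Pos s Hs with conj _ (conj a (conj _ (conj b c))) => conj a (conj b c) end)
      mu1 Dm1 Hu).
  - exact (uniqueness eps nu omega mu u (smooth_CK 3 _ He) (smooth_CK 3 _ Hn) (smooth_CK 3 _ Ho) (smooth_CK 3 _ Hm) (Ck_CK _ _ Cu)
      (fun s Hs => match Pos s Hs with conj _ a => a end)
      mu1 Dm1 Hu).
Qed.
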